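(* Let $(H_i)_{i=0}^\infty = (2^{\alpha_i}3^{\beta_i})_{i=0}^\infty$ be the increasing enumeration of $\mathcal{H}=\{2^\alpha3^\beta : \alpha,\beta\in\mathbb{N}_0\}$, and define $f\colon\mathbb{N}_0\to\{+1,-1\}$ by $f(0)=+1$ and $f(n)=(-1)^{\alpha_i+\beta_i}$ for $n\in\{H_i,H_i+1,\dots,H_{i+1}-1\}$, $i\in\mathbb{N}_0$. Then $f$ is asymptotically $2$-automatic and asymptotically $3$-automatic.
   Context: $\mathbb{N}_0=\{0,1,2,\dots\}$. A property holds for almost all $n\in\mathbb{N}_0$ if the set of $n$ where it fails has upper density $\limsup_{N\to\infty}|\cdot\cap\{0,\dots,N-1\}|/N$ equal to $0$. Sequences $f,g$ are asymptotically equal, $f\simeq g$, if $f(n)=g(n)$ for almost all $n$. The $k$-kernel of $f$ is $\mathcal{N}_k(f) = \{ n \mapsto f(k^\alpha n + r) : \alpha, r \in \mathbb{N}_0,\ r < k^\alpha\}$; $f$ is asymptotically $k$-automatic if $\mathcal{N}_k(f)/{\simeq}$ is finite. *)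

(* Defs.v *)
From mathcomp Require Import all_boot all_algebra.
Set Implicit Arguments. Unset Strict Implicit. Unset Printing Implicit Defensive.
Import GRing.Theory Num.Theory.

(* Upper density of the set {n | P n} is 0:
   limsup_N #{n < N | P n}/N = 0, i.e. for every eps = 1/(k+1) > 0,
   eventually #{n < N | P n} <= eps * N. *)
Definition upper_density_zero (P : pred nat) : Prop :=
  forall k : nat, exists N0 : nat, forall N : nat, N0 <= N ->
    k.+1 * count P (iota 0 N) <= N.

Definition asym_eq (f g : nat -> int) : Prop :=
  upper_density_zero (fun n => f n != g n).

Definition in_kernel (k : nat) (f g : nat -> int) : Prop :=
  exists alpha r : nat, r < k ^ alpha /\ g = (fun n => f (k ^ alpha * n + r)).

Definition asym_automatic (k : nat) (f : nat -> int) : Prop :=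
  exists (m : nat) (L : nat -> nat -> int),
    (forall i, i < m -> in_kernel k f (L i)) /\
    (forall g, in_kernel k f g -> exists2 i, i < m & asym_eq g (L i)).

(* H_i <= n < H_{i+1} where H_i = 2^a 3^b, written without the enumeration:
   2^a 3^b <= n and every element of {2^x 3^y} larger than 2^a 3^b exceeds n. *)
Definition in_block (a b n : nat) : Prop :=
  2 ^ a * 3 ^ b <= n /\
  forall x y : nat, 2 ^ a * 3 ^ b < 2 ^ x * 3 ^ y -> n < 2 ^ x * 3 ^ y.

(* Main.v *)
Require Import Defs.
From mathcomp Require Import all_boot all_algebra.
Import GRing.Theory Num.Theory.
Local Open Scope ring_scope.
From mathcomp Require Import zify.
From Stdlib Require Import Classical.
Set Implicit Arguments. Unset Strict Implicit. Unset Printing Implicit Defensive.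

Section Aux.
Local Open Scope nat_scope.

Lemma count_window (P : pred nat) N lo hi :
  (forall n, n < N -> P n -> lo <= n < hi) -> count P (iota 0 N) <= hi - lo.
Proof.
move=> H; rewrite -size_filter.
have -> : hi - lo = size (iota lo (hi - lo)) by rewrite size_iota.
apply: uniq_leq_size; first by rewrite filter_uniq // iota_uniq.
move=> n; rewrite mem_filter mem_iota => /andP [Pn]; rewrite add0n => nN.
have := H n nN Pn; rewrite mem_iota; lia.
Qed.

Lemma count_window2 (P : pred nat) N q A Bd : 0 < q ->
  (forall n, n < N -> P n -> A < q * n.+1 /\ q * n < Bd) ->
  q * count P (iota 0 N) <= Bd - A + 2 * q.
Proof.
move=> q0 H.
have := @count_window P N (A %/ q) (Bd %/ q).+1.
case/boolP: (has P (iota 0 N)) => [hasP|].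
- move=> C.
  have C' : count P (iota 0 N) <= (Bd %/ q).+1 - A %/ q.
    apply: C => n nN Pn; have [h1 h2] := H n nN Pn.
    apply/andP; split.
      rewrite -ltnS ltn_divLR //; lia.
    rewrite ltnS leq_divRL //; lia.
  have d1 := divn_eq A q; have d2 := divn_eq Bd q.
  have m1 := ltn_pmod A q0; have m2 := ltn_pmod Bd q0.
  have := leq_mul (leqnn q) C'.
  rewrite mulnBr mulnS.
  rewrite [A %/ q * q]mulnC [Bd %/ q * q]mulnC in d1 d2.
  lia.
- rewrite has_count -leqNgt leqn0 => /eqP -> _; by rewrite muln0.
Qed.


Lemma count_orb (a b : pred nat) s : count (fun x => a x || b x) s <= count a s + count b s.
Proof. rewrite -count_predUI; exact: leq_addr. Qed.

Lemma sub_in_count' (a b : pred nat) (s : seq nat) :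
  (forall x, x \in s -> a x -> b x) -> count a s <= count b s.
Proof.
elim: s => //= x s IH H.
apply: leq_add; last by apply: IH => y ys; apply: H; rewrite inE ys orbT.
case ax: (a x) => //; by rewrite (H x (mem_head _ _) ax).
Qed.

Lemma count_has (Q : nat -> pred nat) M s :
  count (fun n => has (fun i => Q i n) (iota 0 M)) s <= \sum_(i < M) count (Q i) s.
Proof.
elim: M => [|M IH]; first by rewrite big_ord0; elim: s => //.
rewrite big_ord_recr.
have -> : iota 0 M.+1 = iota 0 M ++ [:: M] by rewrite -addn1 iotaD.
apply: leq_trans _ (leq_add IH (leqnn _)).
apply: leq_trans _ (count_orb _ _ _).
apply: sub_count => n /=; rewrite has_cat /= orbF //.
Qed.

Lemma count_cover (P : pred nat) (Q : nat -> nat -> pred nat) N B a D :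
  (forall n, n < N -> P n -> n < B \/ exists c d, c < a /\ d < D /\ Q c d n) ->
  count P (iota 0 N) <= B + \sum_(c < a) \sum_(d < D) count (Q c d) (iota 0 N).
Proof.
move=> H.
apply: leq_trans (_ : count (fun n => (n < B) || has (fun c => has (fun d => Q c d n) (iota 0 D)) (iota 0 a)) (iota 0 N) <= _).
  apply: sub_in_count' => n; rewrite mem_iota add0n => /andP [_ nN] Pn.
  case: (H n nN Pn) => [->//|[c [d [ca [dD Qn]]]]].
  apply/orP; right; apply/hasP; exists c; first by rewrite mem_iota.
  apply/hasP; exists d => //; by rewrite mem_iota.
apply: leq_trans (count_orb _ _ _) _.
apply: leq_add.
  have := @count_window (fun n => n < B) N 0 B; rewrite subn0; apply => n _ ->; done.
apply: leq_trans (count_has _ _ _) _.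
apply: leq_sum => c _; exact: count_has.
Qed.

Lemma udz_sub (P Q : pred nat) : (forall n, P n -> Q n) -> upper_density_zero Q -> upper_density_zero P.
Proof.
move=> H U k; have [N0 HN] := U k; exists N0 => N /HN; apply: leq_trans.
by rewrite leq_mul2l sub_count.
Qed.

Lemma udz_U (P Q : pred nat) : upper_density_zero P -> upper_density_zero Q ->
  upper_density_zero (fun n => P n || Q n).
Proof.
move=> UP UQ k; have [N1 H1] := UP (2 * k).+1; have [N2 H2] := UQ (2 * k).+1.
exists (maxn N1 N2) => N; rewrite geq_max => /andP [/H1 h1 /H2 h2].
have := count_orb P Q (iota 0 N); move: (count _ _) (count P _) (count Q _) h1 h2 => x y z; nia.
Qed.


Lemma step_lemma (P : nat -> Prop) M : P 0 -> ~ P M -> exists j, j < M /\ P j /\ ~ P j.+1.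
Proof.
elim: M => [p0 np0|M IH p0 npM]; first by exfalso.
case: (classic (P M)) => [pM|npM'].
  by exists M; split.
have [j [jM [pj npj]]] := IH p0 npM'; exists j; split => //; lia.
Qed.

Lemma geo_sum c0 s Y D : 1 < s ->
  \sum_(d < D) (if c0 * s ^ d < Y then c0 * s ^ d else 0) <= 2 * Y.
Proof.
move=> s2.
suff : \sum_(d < D) (if c0 * s ^ d < Y then c0 * s ^ d else 0) <= 2 * Y /\
       \sum_(d < D) (if c0 * s ^ d < Y then c0 * s ^ d else 0) + c0 <= c0 * s ^ D by case.
elim: D => [|D [IH1 IH2]]; first by rewrite big_ord0 expn0 muln1.
rewrite big_ord_recr /= expnS.
have h : 2 * (c0 * s ^ D) <= c0 * (s * s ^ D).
  by rewrite mulnCA leq_mul2l leq_mul2r s2 !orbT.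
move: (\sum_(i < D) _) IH1 IH2 => S IH1 IH2.
case: ifP => hY; lia.
Qed.

Lemma bernoulli v J : v ^ J * (v + J) <= (v + 1) ^ J * v.
Proof.
elim: J => [|J IH]; first by rewrite !expn0 addn0.
rewrite !expnS.
have : v ^ J * (v + J) * (v + 1) <= (v + 1) ^ J * v * (v + 1) by rewrite leq_mul2r IH orbT.
move: (v ^ J) ((v+1)^J) => a b; nia.
Qed.

Definition isH h := exists x y, h = 2 ^ x * 3 ^ y.

Lemma isH1 : isH 1. Proof. by exists 0, 0. Qed.
Lemma isH2 : isH 2. Proof. by exists 1, 0. Qed.
Lemma isH_mul a b : isH a -> isH b -> isH (a * b).
Proof.
move=> [x [y ->]] [x' [y' ->]]; exists (x + x'), (y + y'); rewrite !expnD.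
by rewrite mulnACA.
Qed.
Lemma isH_exp a n : isH a -> isH (a ^ n).
Proof.
move=> Ha; elim: n => [|n IH]; first exact: isH1.
by rewrite expnS; apply: isH_mul.
Qed.
Lemma isH_pos h : isH h -> 0 < h.
Proof. by move=> [x [y ->]]; rewrite muln_gt0 !expn_gt0. Qed.


Lemma cover_lemma u v K : isH u -> isH v -> v < u -> K * u <= K.+1 * v ->
  exists X0, forall x, X0 <= x -> exists h, isH h /\ x < h /\ K * h <= K.+1 * x.
Proof.
move=> Hu Hv vu Kuv.
have v0 := isH_pos Hv.
set J := v.
have uJ : 2 * v ^ J <= u ^ J.
  have := bernoulli v v.
  have : (v + 1) ^ v <= u ^ v by rewrite leq_exp2r // addn1.
  move: (v ^ v) ((v + 1) ^ v) (u ^ v) => a b c; nia.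
exists (v ^ J) => x xX.
have P0 : v ^ J * 2 ^ 0 <= x by rewrite expn0 muln1.
have nPx : ~ (v ^ J * 2 ^ x.+1 <= x).
  move=> h; have := ltn_expl x.+1 (isT : 1 < 2).
  have : 1 <= v ^ J by rewrite expn_gt0 v0.
  move: h; move: (v ^ J) (2 ^ x.+1) => a b; nia.
have [e [_ [Pe nPe]]] := @step_lemma (fun e => v ^ J * 2 ^ e <= x) x.+1 P0 nPx.
have Q0 : v ^ (J - 0) * u ^ 0 * 2 ^ e <= x by rewrite subn0 expn0 muln1.
have nQJ : ~ (v ^ (J - J) * u ^ J * 2 ^ e <= x).
  rewrite subnn expn0 mul1n => h; apply: nPe; rewrite /= expnS.
  have : 2 * v ^ J * 2 ^ e <= u ^ J * 2 ^ e by rewrite leq_mul2r uJ orbT.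
  move: h; move: (v ^ J) (u ^ J) (2 ^ e) => a b c; nia.
have [j [jJ [Pj nPj]]] := @step_lemma (fun j => v ^ (J - j) * u ^ j * 2 ^ e <= x) J Q0 nQJ.
exists (v ^ (J - j.+1) * u ^ j.+1 * 2 ^ e); split.
  apply: isH_mul; last exact: isH_exp isH2.
  by apply: isH_mul; apply: isH_exp.
split; first by rewrite ltnNge; apply/negP.
have eJ : v ^ (J - j) = v * v ^ (J - j.+1) by rewrite -expnS subnSK.
rewrite eJ expnS in Pj *.
move: Pj Kuv; move: (v ^ (J - j.+1)) (u ^ j) (2 ^ e) => a b c Pj Kuv.
have : v * (K * (a * (u * b) * c)) <= v * (K.+1 * x).
  have : K * u * (a * b * c) <= K.+1 * v * (a * b * c) by rewrite leq_mul2r Kuv orbT.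
  have : K.+1 * (v * a * b * c) <= K.+1 * x by rewrite leq_mul2l Pj orbT.
  nia.
rewrite leq_mul2l; case/orP => // /eqP v00; by rewrite v00 in v0.
Qed.


Lemma t_bounds K j : j <= K ->
  2 ^ (2 * K) <= 3 ^ j * 2 ^ (2 * K - trunc_log 2 (3 ^ j)) < 2 ^ (2 * K).+1.
Proof.
move=> jK.
set l := trunc_log 2 (3 ^ j).
have h1 : 2 ^ l <= 3 ^ j by apply: trunc_logP; rewrite // expn_gt0.
have h2 : 3 ^ j < 2 ^ l.+1 by apply: trunc_log_ltn.
have h3 : 3 ^ j <= 2 ^ (2 * K).
  rewrite expnM; apply: leq_trans (leq_pexp2l _ jK) _ => //.
  by case: (K) => // K'; rewrite leq_exp2r.
have lM : l <= 2 * K by rewrite -(leq_exp2l _ _ (isT : 1 < 2)); apply: leq_trans h1 h3.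
have E : 2 ^ (2 * K) = 2 ^ l * 2 ^ (2 * K - l) by rewrite -expnD subnKC.
have E' : 2 ^ (2 * K).+1 = 2 ^ l.+1 * 2 ^ (2 * K - l) by rewrite -expnD addSn subnKC.
rewrite E E' leq_mul2r h1 orbT /= ltn_mul2r h2 andbT expn_gt0 //.
Qed.

Lemma t_inj i j e1 e2 : i < j -> 3 ^ i * 2 ^ e1 <> 3 ^ j * 2 ^ e2.
Proof.
move=> ij E.
have : 3 %| 2 ^ e1.
  have : 3 ^ i * 2 ^ e1 = 3 ^ i * (3 ^ (j - i) * 2 ^ e2) by rewrite E mulnA -expnD subnKC // ltnW.
  move/eqP; rewrite eqn_mul2l expn_eq0 /= => /eqP ->.
  apply: dvdn_mulr; rewrite dvdn_exp //; lia.
by rewrite Euclid_dvdX.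
Qed.

Lemma pigeon K : exists u v, isH u /\ isH v /\ v < u /\ K * u <= K.+1 * v.
Proof.
case: K => [|K]; first by exists 2, 1; split; [exact: isH2|split; [exact: isH1|]].
set Z := 2 ^ (2 * K.+1).
pose t j := 3 ^ j * 2 ^ (2 * K.+1 - trunc_log 2 (3 ^ j)).
pose box j := (t j - Z) * K.+1 %/ Z.
have Z0 : 0 < Z by rewrite expn_gt0.
have tb : forall j, j <= K.+1 -> Z <= t j < Z * 2.
  by move=> j jK; rewrite /Z -expnSr; apply: t_bounds.
have bK : forall j, j <= K.+1 -> box j < K.+1.
  move=> j jK; rewrite /box ltn_divLR //; have := tb j jK.
  move: (t j) => x; nia.
have nu : ~~ uniq (map box (iota 0 K.+2)).
  apply/negP => U.
  have sub : {subset map box (iota 0 K.+2) <= iota 0 K.+1}.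
    move=> y /mapP [j]; rewrite !mem_iota !add0n => jK ->; exact: bK.
  have := uniq_leq_size U sub.
  by rewrite size_map !size_iota ltnn.
have [i [j [ij jS]]] := uniqPn 0 nu.
rewrite size_map size_iota in jS.
rewrite !(nth_map 0) ?size_iota //; last by lia.
rewrite !nth_iota ?add0n //; last by lia.
move=> bij.
have tij : t i != t j by apply/eqP; apply: t_inj.
have ti := tb i ltac:(lia); have tj := tb j ltac:(lia).
have d1 := divn_eq ((t i - Z) * K.+1) Z; have d2 := divn_eq ((t j - Z) * K.+1) Z.
have m1 := ltn_pmod ((t i - Z) * K.+1) Z0; have m2 := ltn_pmod ((t j - Z) * K.+1) Z0.
rewrite /box in bij; rewrite bij in d1.
have Hi : isH (t i) by exists (2 * K.+1 - trunc_log 2 (3 ^ i)), i; rewrite /t mulnC.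
have Hj : isH (t j) by exists (2 * K.+1 - trunc_log 2 (3 ^ j)), j; rewrite /t mulnC.
move: tij ti tj d1 d2 m1 m2 Hi Hj; move: (t i) (t j) ((t j - Z) * K.+1 %/ Z) => a b q.
rewrite !mulnBl => tij ti tj d1 d2 m1 m2 Hi Hj.
case: (ltngtP a b) tij => // ab _.
  exists b, a; do 3!(split => //).
  have e1 : K.+1 * b = b * K.+1 by rewrite mulnC.
  have e2 : K.+2 * a = a * K.+1 + a by rewrite mulnC mulnS addnC.
  rewrite e1 e2.
  have g1 : Z * K.+1 <= a * K.+1 by rewrite leq_mul2r; case/andP: ti => ->; rewrite orbT.
  have g2 : Z * K.+1 <= b * K.+1 by rewrite leq_mul2r; case/andP: tj => ->; rewrite orbT.
  move: g1 g2 d1 d2 m1 m2; move: (a * K.+1) (b * K.+1) (Z * K.+1) (q * Z) => A1 B1 Z1 QZ.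
  move: (_ %% Z) (_ %% Z) => r1 r2 g1 g2 d1 d2 m1 m2; lia.
exists a, b; do 3!(split => //).
have e1 : K.+1 * a = a * K.+1 by rewrite mulnC.
have e2 : K.+2 * b = b * K.+1 + b by rewrite mulnC mulnS addnC.
rewrite e1 e2.
have g1 : Z * K.+1 <= a * K.+1 by rewrite leq_mul2r; case/andP: ti => ->; rewrite orbT.
have g2 : Z * K.+1 <= b * K.+1 by rewrite leq_mul2r; case/andP: tj => ->; rewrite orbT.
move: g1 g2 d1 d2 m1 m2; move: (a * K.+1) (b * K.+1) (Z * K.+1) (q * Z) => A1 B1 Z1 QZ.
move: (_ %% Z) (_ %% Z) => r1 r2 g1 g2 d1 d2 m1 m2; lia.
Qed.


Lemma gap K : exists X0, forall x, X0 <= x -> exists h, isH h /\ x < h /\ K * h <= K.+1 * x.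
Proof.
have [u [v [Hu [Hv [vu Kuv]]]]] := pigeon K.
exact: cover_lemma Hu Hv vu Kuv.
Qed.

Definition blk h n := h <= n /\ forall h', isH h' -> h < h' -> n < h'.

Lemma exists_blk n : 0 < n -> exists h, isH h /\ blk h n.
Proof.
move=> n0.
have Q0 : exists h, isH h /\ 0 < h <= n by exists 1; split; [exact: isH1|lia].
have nQ : ~ exists h, isH h /\ n < h <= n by move=> [h [_ ?]]; lia.
have [t [_ [[h [Hh th]] nt]]] := @step_lemma (fun t => exists h, isH h /\ t < h <= n) n Q0 nQ.
exists h; split => //; split; first lia.
move=> h' Hh' hh'; rewrite ltnNge; apply/negP => h'n; apply: nt; exists h'; split => //; lia.
Qed.


Definition Qp p s a K B c d n :=
  [&& B <= n, p ^ c * s ^ d < p ^ a * n.+1 & p ^ a * K * n < K.+1 * (p ^ c * s ^ d)].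

Lemma cover_step (f : nat -> int) p s a r K X0 B N n :
  1 < p -> 1 < s -> (forall h, isH h <-> exists c d, h = p ^ c * s ^ d) ->
  (forall c d n, blk (p ^ c * s ^ d) n -> f n = ((-1) ^+ (c + d))%R) ->
  (forall x, X0 <= x -> exists h, isH h /\ x < h /\ K * h <= K.+1 * x) ->
  0 < K -> p * X0 <= B -> 0 < B -> r < p ^ a ->
  n < N -> f (p ^ a * n + r) != ((-1) ^+ a * f n)%R ->
  n < B \/ exists c d, c < a /\ d < p ^ a * N /\ Qp p s a K B c d n.
Proof.
move=> p1 s1 HPS Hsign Hgap K0 pXB B0 ra nN En.
case: (ltnP n B) => nB; [by left|right].
have n0 : 0 < n by lia.
have [h0 [Hh0 [h0n bh0]]] := exists_blk n0.
have [x [y e0]] := (HPS h0).1 Hh0.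
have fn : f n = ((-1) ^+ (x + y))%R by apply: Hsign; rewrite -e0; split.
have pa0 : 0 < p ^ a by rewrite expn_gt0; lia.
have nblk : ~ blk (p ^ a * h0) (p ^ a * n + r).
  move=> bl; move/negP: En; apply; apply/eqP.
  rewrite fn -GRing.exprD (Hsign (a + x) y) ?addnA //.
  by rewrite expnD -mulnA -e0.
have [h' [Hh' [lt1 le1]]] : exists h', isH h' /\ p ^ a * h0 < h' /\ h' <= p ^ a * n + r.
  apply: NNPP => C; apply: nblk; split; first by rewrite (leq_trans _ (leq_addr _ _)) // leq_mul2l h0n orbT.
  move=> h1 Hh1 lt2; rewrite ltnNge; apply/negP => le2; apply: C; by exists h1.
have [c [d e']] := (HPS h').1 Hh'.
have ph0 : n < p * h0.
  apply: bh0.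
    by rewrite -(expn1 p); apply: isH_mul => //; apply: isH_exp; apply/HPS; exists 1, 0; rewrite expn0 muln1.
  by apply: ltn_Pmull => //; apply: isH_pos.
have ca : c < a.
  rewrite ltnNge; apply/negP => ac.
  have Hh'' : isH (p ^ (c - a) * s ^ d) by apply/HPS; exists (c - a), d.
  have eh : h' = p ^ a * (p ^ (c - a) * s ^ d) by rewrite e' mulnA -expnD subnKC.
  have : h0 < p ^ (c - a) * s ^ d by rewrite -(ltn_pmul2l pa0) -eh.
  move/(bh0 _ Hh'') => nh.
  have : p ^ a * n.+1 <= h' by rewrite eh leq_mul2l nh orbT.
  rewrite mulnS; lia.
have X0h0 : X0 <= h0.
  have : p * X0 < p * h0 by lia.
  rewrite ltn_pmul2l; [lia | lia].
have [hs [Hhs [h0hs Khs]]] := Hgap h0 X0h0.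
have nhs : n < hs := bh0 hs Hhs h0hs.
exists c, d; split => //; split.
  have : d < s ^ d by apply: ltn_expl.
  have : s ^ d <= h' by rewrite e' leq_pmull // expn_gt0; lia.
  have : p ^ a * n + r < p ^ a * N.
    have : p ^ a * n.+1 <= p ^ a * N by rewrite leq_mul2l nN orbT.
    rewrite mulnS; lia.
  lia.
rewrite /Qp -e' nB /=.
apply/andP; split.
  rewrite mulnS; lia.
have i1 : K * n < K * hs by rewrite ltn_pmul2l.
have : p ^ a * K * n < p ^ a * (K.+1 * h0).
  rewrite -mulnA ltn_pmul2l //; lia.
have : K.+1 * (p ^ a * h0) < K.+1 * h' by rewrite ltn_pmul2l.
rewrite mulnCA; lia.
Qed.


Lemma count_Q p s a K B c d N : 0 < p -> 0 < K -> 2 * K.+1 <= B ->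
  p ^ a * K * count (Qp p s a K B c d) (iota 0 N) <=
  (if p ^ c * s ^ d < p ^ a * N then 2 * (p ^ c * s ^ d) else 0).
Proof.
move=> p0 K0 BK.
have pa0 : 0 < p ^ a by rewrite expn_gt0 p0.
set h := p ^ c * s ^ d.
case: (classic (exists n, n < N /\ Qp p s a K B c d n)) => [[n [nN Qn]]|nQ]; last first.
  have := @count_window (Qp p s a K B c d) N 0 0.
  rewrite subn0 leqn0 => /(_ _) /eqP -> ; first by rewrite muln0.
  move=> m mN Qm; exfalso; apply: nQ; by exists m.
have facts : forall m, m < N -> Qp p s a K B c d m -> h < p ^ a * N /\ 2 * (p ^ a * K) <= h.
  move=> m mN /and3P [Bm hm hK]; split.
    apply: leq_trans hm _; by rewrite leq_mul2l mN orbT.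
  have i2 : p ^ a * K * (2 * K.+1) <= p ^ a * K * m by rewrite leq_mul2l (leq_trans BK Bm) orbT.
  move: hK; rewrite -/h => hK.
  have : K.+1 * (2 * (p ^ a * K)) < K.+1 * h.
    have e : K.+1 * (2 * (p ^ a * K)) = p ^ a * K * (2 * K.+1) by lia.
    rewrite e; lia.
  rewrite ltn_mul2l /= => /ltnW; done.
have [hN hK] := facts n nN Qn.
rewrite hN.
have q0 : 0 < p ^ a * K by rewrite muln_gt0 pa0 K0.
have := @count_window2 (Qp p s a K B c d) N (p ^ a * K) (K * h) (K.+1 * h) q0.
have H : forall m, m < N -> Qp p s a K B c d m -> K * h < p ^ a * K * m.+1 /\ p ^ a * K * m < K.+1 * h.
  move=> m mN /and3P [_ hm hK2]; split => //.
  by rewrite mulnAC (mulnC K) ltn_pmul2r.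
move/(_ H); rewrite mulSn addnC addnK; lia.
Qed.


Lemma main_E (f : nat -> int) p s a r :
  1 < p -> 1 < s -> (forall h, isH h <-> exists c d, h = p ^ c * s ^ d) ->
  (forall c d n, blk (p ^ c * s ^ d) n -> f n = ((-1) ^+ (c + d))%R) ->
  r < p ^ a ->
  upper_density_zero (fun n => f (p ^ a * n + r) != ((-1) ^+ a * f n)%R).
Proof.
move=> p1 s1 HPS Hsign ra k.
set K := 8 * (a + 1) * (k + 1).
have K0 : 0 < K by rewrite /K; lia.
have [X0 HX] := gap K.
set B := p * X0 + 2 * K.+1 + 1.
exists (2 * (k + 1) * B) => N NB.
have pa0 : 0 < p ^ a by rewrite expn_gt0; lia.
have C := @count_cover (fun n => f (p ^ a * n + r) != ((-1) ^+ a * f n)%R)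
  (fun c d => Qp p s a K B c d) N B a (p ^ a * N)
  (fun n nN En => @cover_step f p s a r K X0 B N n p1 s1 HPS Hsign HX K0
     ltac:(rewrite /B; lia) ltac:(rewrite /B; lia) ra nN En).
move: C; set S := \sum_(c < a) _ => C.
have HS : p ^ a * K * S <= a * (4 * (p ^ a * N)).
  rewrite /S big_distrr /=.
  apply: leq_trans (_ : \sum_(c < a) (4 * (p ^ a * N)) <= _); last first.
    by rewrite sum_nat_const card_ord.
  apply: leq_sum => c _; rewrite big_distrr /=.
  apply: leq_trans (_ : \sum_(d < p ^ a * N)
     (if p ^ c * s ^ d < p ^ a * N then 2 * (p ^ c * s ^ d) else 0) <= _).
    apply: leq_sum => d _; apply: count_Q; rewrite /B; lia.
  have -> : \sum_(d < p ^ a * N) (if p ^ c * s ^ d < p ^ a * N then 2 * (p ^ c * s ^ d) else 0)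
    = 2 * \sum_(d < p ^ a * N) (if p ^ c * s ^ d < p ^ a * N then p ^ c * s ^ d else 0).
    rewrite big_distrr /=; apply: eq_bigr => d _; by case: ifP; rewrite ?muln0.
  have := geo_sum (p ^ c) (p ^ a * N) (p ^ a * N) s1; lia.
have HS' : K * S <= a * (4 * N).
  have e : p ^ a * K * S = p ^ a * (K * S) by rewrite mulnA.
  have e2 : a * (4 * (p ^ a * N)) = p ^ a * (a * (4 * N)) by lia.
  move: HS; rewrite e e2 leq_mul2l; case/orP => // /eqP ea; by rewrite ea in pa0.
have HS2 : 2 * (k + 1) * S <= N.
  rewrite leqNgt; apply/negP => H.
  have : 4 * (a + 1) * N < 4 * (a + 1) * (2 * (k + 1) * S) by rewrite ltn_mul2l H; lia.
  rewrite /K in HS'; lia.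
clear HS HS'. move: C HS2 NB; move: (count _ _) S => c S0 C HS2 NB.
have : (k + 1) * c <= (k + 1) * (B + S0) by rewrite leq_mul2l C orbT.
lia.
Qed.


Lemma auto_of (f : nat -> int) p : 0 < p ->
  (forall a r, r < p ^ a -> upper_density_zero (fun n => f (p ^ a * n + r) != ((-1) ^+ a * f n)%R)) ->
  asym_automatic p f.
Proof.
move=> p0 HE.
exists 2, (fun i n => f (p ^ i * n + 0)); split.
  move=> i _; exists i, 0; split => //; by rewrite expn_gt0 p0.
move=> g [al [r [ral ->]]].
case oa: (odd al).
- exists 1 => //; rewrite /asym_eq.
  apply: udz_sub (udz_U (HE al r ral) (HE 1 0 ltac:(by rewrite expn1))) => n /=.
  rewrite -signr_odd oa /= expr1 mulN1r.
  apply: contraR; rewrite negb_or !negbK => /andP [/eqP -> /eqP ->]; done.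
- exists 0 => //; rewrite /asym_eq.
  apply: udz_sub (HE al r ral) => n /=.
  by rewrite -signr_odd oa /= expr0 mul1r expn0 mul1n addn0.
Qed.

End Aux.

Unset Implicit Arguments.

Theorem proposition4p3 (f : nat -> int) :
  f 0%N = 1 ->
  (forall a b n : nat, in_block a b n -> f n = (-1) ^+ (a + b)) ->
  asym_automatic 2 f /\ asym_automatic 3 f.
Proof.
move=> _ hf; split.
- apply: auto_of => // a r ra; apply: (@main_E f 2 3) => //.
  move=> c d n [h1 h2]; apply: hf; split => // x y lt; apply: h2 => //; by exists x, y.
- apply: auto_of => // a r ra; apply: (@main_E f 3 2) => //.
    move=> h; split; move=> [x [y ->]]; exists y, x; by rewrite mulnC.
  move=> c d n [h1 h2]; rewrite addnC; apply: hf; split; first by rewrite mulnC.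
  move=> x y lt; apply: h2; [by exists x, y | by rewrite mulnC].
Qed.
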